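(* Let $G$ be a minimal DPDP-graph and let $(D,P)$ be a DP-pair in $G$. Then: (1) $D$ is a maximal independent set in $G$. (2) The induced subgraph $G[P]$ consists of independent edges, i.e., $\delta(G[P])=\Delta(G[P])=1$. (3) If $x\in P$, then $|N_G(x)\setminus P|=1$ or $N_G(x)\setminus P$ is a nonempty subset of the set $L_G$ of leaves of $G$. (4) $G$ is a 2-subdivision graph $S_2(H)$ of some graph $H$ (without isolated vertices, with respect to some function $\alpha$).
   Context: Graphs are finite and may have multiple edges and loops. A leaf is a vertex of degree one. A set $D\subseteq V(G)$ is dominating if every vertex outside $D$ has a neighbor in $D$; $P$ is paired-dominating if it is dominating and the subgraph induced by $P$ has a perfect matching. A DP-pair of $G$ is a pair $(D,P)$ of disjoint sets with $V(G)=D\cup P$, $D$ dominating and $P$ paired-dominating. A DPDP-graph is a graph with a DP-pair; a minimal DPDP-graph is a DPDP-graph no proper spanning subgraph of which is a DPDP-graph. 2-subdivision graph: for a graph $H$ with no isolated vertex, set of leaves $L_H$, and $\alpha:L_H\to\mathbb{N}=\{1,2,\dots\}$, $S_2(H)$ has vertex set $(V_H\setminus L_H)\cup\{(v,i): v\in L_H, 1\le i\le \alpha(v)\}$ together with two new vertices for each edge $e$ of $H$ ($u_e,v_e$ if $e$ joins $u\ne v$; $v_e^1,v_e^2$ if $e$ is a loop at $v$). Its edges are: the edge joining the two new vertices of each $e$; for $v\in V_H\setminus L_H$, $vv_e$ for each non-loop edge $e$ at $v$ and $vv_e^1,vv_e^2$ for each loop $e$ at $v$; for $v\in L_H$ with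 incident edge $e$, the edges $v_e(v,i)$, $1\le i\le\alpha(v)$. *)

(* Defs.v *)
From HB Require Import structures.
From mathcomp Require Import all_boot.
Set Implicit Arguments. Unset Strict Implicit. Unset Printing Implicit Defensive.

(* Finite multigraphs (multiple edges and loops allowed): a finite vertex
   type V, a finite edge type E and an incidence map [ends : E -> V * V];
   the pair of ends is read as unordered; e is a loop iff both ends coincide.
   All notions below are relative to an edge subset S : {set E}; the graph
   itself is S = setT, and spanning subgraphs are given by S \subset setT. *)

Section Graph.
Variables (V E : finType) (ends : E -> V * V).

Definition endk (p : E * bool) : V :=
  if p.2 then (ends p.1).2 else (ends p.1).1.

(* degree: number of edge-sides at v (a loop counts twice) *)
Definition deg (S : {set E}) (v : V) : nat :=
  #|[set p : E * bool | (p.1 \in S) && (endk p == v)]|.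

Definition adj (S : {set E}) (u v : V) : bool :=
  [exists e in S, (ends e == (u, v)) || (ends e == (v, u))].

Definition nbhd (S : {set E}) (x : V) : {set V} := [set y | adj S x y].

Definition leaves (S : {set E}) : {set V} := [set v | deg S v == 1].

Definition dominating (S : {set E}) (D : {set V}) : bool :=
  [forall v, (v \notin D) ==> [exists u in D, adj S v u]].

Definition induced_perfect_matching (S : {set E}) (P : {set V}) : bool :=
  [exists M : {set E}, (M \subset S) &&
     [forall e in M, [&& (ends e).1 != (ends e).2, (ends e).1 \in P
                       & (ends e).2 \in P]] &&
     [forall x in P,
        #|[set e in M | ((ends e).1 == x) || ((ends e).2 == x)]| == 1]].

Definition paired_dominating (S : {set E}) (P : {set V}) : bool :=
  dominating S P && induced_perfect_matching S P.

Definition DPpair (S : {set E}) (D P : {set V}) : bool :=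
  [&& D :&: P == set0, D :|: P == setT, dominating S D
    & paired_dominating S P].

Definition DPDP (S : {set E}) : bool := [exists D, exists P, DPpair S D P].

Definition minimal_DPDP : bool :=
  DPDP setT && [forall S : {set E}, (S \proper setT) ==> ~~ DPDP S].

Definition independent (S : {set E}) (D : {set V}) : bool :=
  [forall e in S, ~~ (((ends e).1 \in D) && ((ends e).2 \in D))].

(* degree of x in the induced subgraph G[P] (loops count twice) *)
Definition induced_deg (S : {set E}) (P : {set V}) (x : V) : nat :=
  #|[set p : E * bool | [&& p.1 \in S, endk p == x, (ends p.1).1 \in P
                          & (ends p.1).2 \in P]]|.

End Graph.

Record mgraph := MGraph {
  gV : finType;
  gE : finType;
  gends : gE -> gV * gV }.

Definition no_isolated (H : mgraph) : Prop :=
  forall v : gV H, 0 < deg (@gends H) setT v.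

Definition hleaf (H : mgraph) (v : gV H) : bool := deg (@gends H) setT v == 1.

Definition mg_iso (G1 G2 : mgraph) : Prop :=
  exists (f : gV G1 -> gV G2) (g : gE G1 -> gE G2),
    [/\ bijective f, bijective g &
      forall e, @gends G2 (g e) = (f (@gends G1 e).1, f (@gends G1 e).2)
             \/ @gends G2 (g e) = (f (@gends G1 e).2, f (@gends G1 e).1)].

(* The 2-subdivision graph S_2(H) w.r.t. alpha (only values on leaves used).
   Vertices: non-leaves v of H; copies (v,i), i < alpha v, of each leaf v
   (index i stands for i+1); two new vertices (e,false),(e,true) per edge e,
   where (e,false) is "u_e" / "v_e^1" for the first end u of e and (e,true)
   is "v_e" / "v_e^2" for the second end v.
   Edges: (a) (e,false)-(e,true) for each e; (b) v-(e,k) whenever the k-th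
   end of e is the non-leaf v; (c) (e,k)-(v,i) whenever the k-th end of e is
   the leaf v (its unique edge-side) and i < alpha v. *)
Section S2.
Variables (H : mgraph) (alpha : gV H -> nat).

Definition S2_nonleaf := {v : gV H | ~~ hleaf v}.
Definition S2_leafcopy := {v : {v : gV H | hleaf v} & 'I_(alpha (val v))}.
Definition S2_V : finType := ((S2_nonleaf + S2_leafcopy) + (gE H * bool))%type.

Definition S2_Eb := {p : gE H * bool | ~~ hleaf (endk (@gends H) p)}.
Definition S2_Ec :=
  {x : {p : gE H * bool | hleaf (endk (@gends H) p)} &
       'I_(alpha (endk (@gends H) (val x)))}.
Definition S2_E : finType := ((gE H + S2_Eb) + S2_Ec)%type.

Definition S2_ends (e : S2_E) : S2_V * S2_V :=
  match e with
  | inl (inl a) => (inr (a, false), inr (a, true))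
  | inl (inr b) =>
      (inl (inl (exist _ (endk (@gends H) (val b)) (valP b))), inr (val b))
  | inr c =>
      (inr (val (tag c)),
       inl (inr (existT (fun v : {v : gV H | hleaf v} => 'I_(alpha (val v)))
                        (exist _ (endk (@gends H) (val (tag c))) (valP (tag c)))
                        (tagged c))))
  end.

Definition S2 : mgraph := MGraph S2_ends.
End S2.

(* Main.v *)
Require Import Defs.
From HB Require Import structures.
From mathcomp Require Import all_boot.
Set Implicit Arguments. Unset Strict Implicit. Unset Printing Implicit Defensive.

Section Main.
Variables (V E : finType) (ends : E -> V * V) (D P : {set V}) (M : {set E}).
Hypothesis Hmin : minimal_DPDP ends.
Hypothesis HDP0 : D :&: P = set0.
Hypothesis HDP1 : D :|: P = setT.
Hypothesis HdomD : dominating ends setT D.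
Hypothesis HdomP : dominating ends setT P.
Hypothesis HMe : forall e, e \in M -> [&& (ends e).1 != (ends e).2, (ends e).1 \in P & (ends e).2 \in P].
Hypothesis HMx : forall x, x \in P -> #|[set e in M | ((ends e).1 == x) || ((ends e).2 == x)]| = 1.

Definition conn e a b := (ends e == (a,b)) || (ends e == (b,a)).

Lemma adjP (S : {set E}) u v : reflect (exists2 e, e \in S & conn e u v) (adj ends S u v).
Proof. exact: (iffP exists_inP). Qed.

Lemma connC e a b : conn e a b = conn e b a.
Proof. by rewrite /conn orbC. Qed.

Lemma adjC (S : {set E}) u v : adj ends S u v = adj ends S v u.
Proof. by apply/adjP/adjP => -[e he c]; exists e => //; rewrite connC. Qed.

Lemma notDP v : (v \in D) = (v \notin P).
Proof.
have h1 : v \in D :|: P by rewrite HDP1 inE.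
have h2 : v \notin D :&: P by rewrite HDP0 inE.
move: h1 h2; rewrite !inE; by case: (v \in D); case: (v \in P).
Qed.

Lemma domE (S : {set E}) X : dominating ends S X -> forall v, v \notin X -> exists u, u \in X /\ exists2 e, e \in S & conn e v u.
Proof.
move=> /forallP H v hv; move: (H v); rewrite hv /= => /exists_inP [u hu /adjP [e he c]].
by exists u; split => //; exists e.
Qed.

Lemma dom_rm e X : dominating ends setT X ->
  (forall v u, v \notin X -> u \in X -> conn e v u ->
     exists u', u' \in X /\ exists2 e1, e1 != e & conn e1 v u') ->
  dominating ends (setT :\ e) X.
Proof.
move=> HX Hr; apply/forallP => v; apply/implyP => hv.
have [u [hu [e1 _ c1]]] := domE HX hv.
case: (eqVneq e1 e) => [E1|ne].
  subst e1; have [u' [hu' [e2 ne2 c2]]] := Hr v u hv hu c1.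
  apply/exists_inP; exists u' => //; apply/adjP; exists e2 => //.
  by rewrite !inE ne2.
apply/exists_inP; exists u => //; apply/adjP; exists e1 => //.
by rewrite !inE ne.
Qed.

Lemma rm_false e : e \notin M -> dominating ends (setT :\ e) D ->
   dominating ends (setT :\ e) P -> False.
Proof.
move=> heM hD hP.
case/andP: Hmin => _ /forallP /(_ (setT :\ e)).
rewrite properD1 ?inE //= => /negP; apply.
apply/existsP; exists D; apply/existsP; exists P.
rewrite /DPpair HDP0 HDP1 !eqxx hD /paired_dominating hP /=.
apply/existsP; exists M; apply/andP; split; first (apply/andP; split).
- apply/subsetP => f hf; rewrite !inE andbT; apply/negP => /eqP ef.
  by subst f; rewrite hf in heM.
- by apply/forall_inP => f hf; apply: HMe.
- by apply/forall_inP => x hx; rewrite HMx.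
Qed.


Lemma card1_eq (T : finType) (A : {set T}) a b : #|A| = 1 -> a \in A -> b \in A -> a = b.
Proof. by move/eqP/cards1P => [x ->]; rewrite !inE => /eqP -> /eqP ->. Qed.

Lemma card_ne1 (T : finType) (A : {set T}) a : a \in A -> #|A| != 1 -> exists2 b, b \in A & b != a.
Proof.
move=> ha hc; case: (boolP [exists b in A, b != a]) => [/exists_inP [b hb nb]|H].
  by exists b.
suff: A = [set a] by move=> eA; rewrite eA cards1 in hc.
apply/setP => b; rewrite inE; apply/idP/eqP => [hb|->//].
by apply/eqP; apply: contraNT H => nb; apply/exists_inP; exists b.
Qed.

Lemma endkF e : endk ends (e, false) = (ends e).1. Proof. by []. Qed.
Lemma endkT e : endk ends (e, true) = (ends e).2. Proof. by []. Qed.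

Lemma conn_cases e a b c d : conn e a b -> conn e c d -> (a = c /\ b = d) \/ (a = d /\ b = c).
Proof.
rewrite /conn => /orP [] /eqP -> /orP [] /eqP [-> ->]; auto.
Qed.

Lemma conn_uniq e a b b' : conn e a b -> conn e a b' -> b = b'.
Proof. by move=> h1 h2; case: (conn_cases h1 h2) => -[] // -> ->. Qed.

Lemma conn_endk e a b : conn e a b -> exists k, endk ends (e,k) = a /\ endk ends (e, ~~k) = b.
Proof.
rewrite /conn /endk /= => /orP [] /eqP ->; [exists false | exists true]; by [].
Qed.

Lemma endk_conn e k : conn e (endk ends (e,k)) (endk ends (e, ~~k)).
Proof. by rewrite /conn /endk; case: k; rewrite /= -!surjective_pairing eqxx ?orbT. Qed.

Lemma nonM_DP e : e \notin M -> ((ends e).1 \in D) != ((ends e).2 \in D).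
Proof.
move=> heM; apply/negP => /eqP Heq; apply: (rm_false heM).
- apply: dom_rm => // v u hv hu c; exfalso; move: c Heq hv hu.
  rewrite /conn => /orP [] /eqP -> /=; rewrite ?notDP; by case: (v \in P); case: (u \in P).
- apply: dom_rm => // v u hv hu c; exfalso; move: c Heq hv hu.
  rewrite /conn => /orP [] /eqP -> /=; rewrite ?notDP; by case: (v \in P); case: (u \in P).
Qed.

Lemma noloop e : (ends e).1 != (ends e).2.
Proof.
case: (boolP (e \in M)) => [/HMe /and3P [] //|/nonM_DP].
by apply: contra => /eqP ->.
Qed.

Lemma connD e a b : conn e a b -> a \in D -> b \in P.
Proof.
move=> c ha; case: (boolP (e \in M)) => [/HMe /and3P [_ h1 h2]|/nonM_DP].
  by move: ha; rewrite notDP; case/orP: c => /eqP E'; rewrite E' /= in h1 h2; rewrite ?h1 ?h2.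
rewrite -[b \in P]negbK -notDP.
by case/orP: c => /eqP ->; rewrite /= ha //; case: (_ \in D).
Qed.

Lemma connP e a b : conn e a b -> a \in P -> b \notin P -> b \in D.
Proof. by move=> _ _; rewrite notDP. Qed.

Lemma rm_par e e' : e \notin M -> e != e' -> conn e' (ends e).1 (ends e).2 -> False.
Proof.
move=> heM ne c'; have ce : conn e (ends e).1 (ends e).2 by rewrite /conn -surjective_pairing eqxx.
apply: (rm_false heM); apply: dom_rm => // v u _ hu c; exists u; split => //;
 exists e'; rewrite 1?eq_sym //;
 (case: (conn_cases ce c) => -[<- <-] //; by rewrite connC).
Qed.

Lemma simple e e' : e != e' -> conn e' (ends e).1 (ends e).2 -> False.
Proof.
move=> ne c.
case: (boolP (e \in M)) => heM; last exact: rm_par heM ne c.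
case: (boolP (e' \in M)) => he'M; last first.
  have ne' : e' != e by rewrite eq_sym.
  apply: (rm_par he'M ne').
  by rewrite /conn; case/orP: c => /eqP -> /=; rewrite -surjective_pairing eqxx ?orbT.
have hx : (ends e).1 \in P by case/and3P: (HMe heM).
have := HMx hx; set S := [set _ in M | _] => hS.
have h1 : e \in S by rewrite inE heM eqxx.
have h2 : e' \in S.
  by rewrite inE he'M; move: c; rewrite /conn => /orP [] /eqP ->; rewrite eqxx ?orbT.
by move: ne; rewrite (card1_eq hS h1 h2) eqxx.
Qed.

Lemma mside_ex x : x \in P -> exists m k, m \in M /\ endk ends (m,k) = x.
Proof.
move=> hx; have := HMx hx; set S := [set _ in M | _] => hS.
have : 0 < #|S| by rewrite hS.
case/card_gt0P => m; rewrite inE => /andP [hm /orP [] /eqP h].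
  by exists m, false.
by exists m, true.
Qed.

Lemma mside_uniq m k m' k' : m \in M -> m' \in M -> endk ends (m,k) = endk ends (m',k') -> m = m' /\ k = k'.
Proof.
move=> hm hm' he.
have hx : endk ends (m,k) \in P by case/and3P: (HMe hm); case: k {he}.
have := HMx hx; set S := [set _ in M | _] => hS.
have h1 : m \in S by rewrite inE hm /endk; case: (k) => /=; rewrite eqxx ?orbT.
have h2 : m' \in S by rewrite inE hm' he /endk; case: (k') => /=; rewrite eqxx ?orbT.
have em := card1_eq hS h1 h2; subst m'; split => //.
move: he (noloop m); clear; rewrite /endk; by case: k; case: k' => //= ->; rewrite eqxx.
Qed.

Definition sides y := [set p : E * bool | (p.1 \in [set: E]) && (endk ends p == y)].

Lemma other_edge y e a : conn e y a -> deg ends setT y != 1 ->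
  exists e2 b, e2 != e /\ conn e2 y b.
Proof.
move=> c hd; have [k [hk _]] := conn_endk c.
have hin : (e,k) \in sides y by rewrite !inE /= hk eqxx.
have [[e2 k2] hp ne] := card_ne1 hin hd.
move: hp; rewrite !inE /= => /eqP hk2.
exists e2, (endk ends (e2, ~~k2)); split; last by rewrite -{1}hk2; apply: endk_conn.
apply/eqP => ee; subst e2; move: ne (noloop e) hk hk2; clear; rewrite /endk.
case: k; case: k2 => /=; rewrite ?eqxx // => _ nl h1 h2; by rewrite h1 h2 eqxx in nl.
Qed.

Lemma uniqD x y y' : x \in P -> y \in D -> adj ends setT x y -> deg ends setT y != 1 ->
  y' \in D -> adj ends setT x y' -> y' = y.
Proof.
move=> hx hy /adjP [e _ c] hd hy' /adjP [e' _ c'].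
apply/eqP; apply/negPn/negP => ne.
have heM : e \notin M.
  apply/negP => /HMe /and3P [_ h1 h2]; move: hy; rewrite notDP.
  by case/orP: c => /eqP E'; rewrite E' /= in h1 h2; rewrite ?h1 ?h2.
apply: (rm_false heM).
- apply: dom_rm => // v u hv hu cvu.
  have ev : v = x.
    case: (conn_cases c cvu) => -[h1 h2] //.
    by rewrite -h2 hy in hv.
  subst v; exists y'; split => //; exists e' => //.
  apply/eqP => ee; subst e'; move: ne; by rewrite (conn_uniq c c') eqxx.
- apply: dom_rm => // v u hv hu cvu.
  have ev : v = y.
    case: (conn_cases c cvu) => -[h1 h2] //.
    by rewrite -h1 hx in hv.
  subst v; rewrite connC in c.
  have [e2 [b [ne2 c2]]] := other_edge c hd.
  exists b; split; first exact: connD c2 hy.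
  by exists e2.
Qed.

Lemma leaf_uniq y x x' : deg ends setT y == 1 -> adj ends setT y x -> adj ends setT y x' -> x = x'.
Proof.
move=> /eqP hd /adjP [e _ c] /adjP [e' _ c'].
have [k [hk _]] := conn_endk c; have [k' [hk' _]] := conn_endk c'.
have h1 : (e,k) \in sides y by rewrite !inE /= hk eqxx.
have h2 : (e',k') \in sides y by rewrite !inE /= hk' eqxx.
case: (card1_eq hd h1 h2) => ee _; subst e'.
exact: conn_uniq c c'.
Qed.


Definition ND x := [set y | (y \in D) && adj ends setT x y].
Definition leafG v := deg ends setT v == 1.
Definition leafy x := [forall y in ND x, leafG y].
Definition phi v :=
  if v \in P then (if leafy v then v else odflt v [pick y in ND v])
  else (if leafG v then odflt v [pick x | adj ends setT v x] else v).

Lemma ND_ne x : x \in P -> exists y, y \in ND x.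
Proof.
move=> hx; have hx' : x \notin D by rewrite notDP hx.
have [u [hu [e _ c]]] := domE HdomD hx'.
by exists u; rewrite inE hu; apply/adjP; exists e.
Qed.

Lemma phi_leafy x : x \in P -> leafy x -> phi x = x.
Proof. by move=> hx hl; rewrite /phi hx hl. Qed.

Lemma phi_nonleafy x : x \in P -> ~~ leafy x ->
  [/\ phi x \in D, ~~ leafG (phi x), adj ends setT x (phi x) & forall y, y \in ND x -> y = phi x].
Proof.
move=> hx; rewrite /leafy negb_forall => /existsP [y0]; rewrite negb_imply => /andP [hy0 nl].
have hall : forall y, y \in ND x -> y = y0.
  move: hy0; rewrite inE => /andP [h1 h2] y; rewrite inE => /andP [h3 h4].
  exact: uniqD hx h1 h2 nl h3 h4.
have -> : phi x = y0.
  rewrite /phi hx; case: ifP => [/forall_inP hl|_]; first by move: nl; rewrite hl.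
  by case: pickP => [y hy /=|/(_ y0)]; [exact: hall | rewrite hy0].
by move: hy0; rewrite inE => /andP [h1 h2]; split.
Qed.

Lemma phi_adjnl x y : x \in P -> y \in D -> adj ends setT x y -> ~~ leafG y -> phi x = y.
Proof.
move=> hx hy ha nl.
have hyN : y \in ND x by rewrite inE hy ha.
have nly : ~~ leafy x by apply/forall_inP => /(_ y hyN); apply/negP.
by have [_ _ _ H] := phi_nonleafy hx nly; rewrite -(H y hyN).
Qed.

Lemma phi_Dnl y : y \in D -> ~~ leafG y -> phi y = y.
Proof. by move=> hy nl; rewrite /phi -[y \in P]negbK -notDP hy /= (negbTE nl). Qed.

Lemma leafy_of x y : x \in P -> y \in D -> adj ends setT x y -> leafG y -> leafy x.
Proof.
move=> hx hy ha hl; apply/forall_inP => y'; rewrite inE => /andP [hy' ha'].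
apply/negPn/negP => nl; have ey := uniqD hx hy' ha' nl hy ha.
by move: hl; rewrite ey (negbTE nl).
Qed.

Lemma phi_Dl y : y \in D -> leafG y ->
  [/\ phi y \in P, adj ends setT y (phi y) & leafy (phi y)].
Proof.
move=> hy hl; have hy' : y \notin P by rewrite -notDP.
have [x [hx [e _ c]]] := domE HdomP hy'.
have ha : adj ends setT y x by apply/adjP; exists e.
have -> : phi y = x.
  rewrite /phi (negbTE hy') hl.
  case: pickP => [x' hx' /=|/(_ x)]; last by rewrite ha.
  exact: leaf_uniq hl hx' ha.
split => //; apply: leafy_of hx hy _ hl; by rewrite adjC.
Qed.

Definition HV := phi @: [set: V].

Lemma HV_char v : (v \in HV) = ((v \in P) && leafy v) || ((v \in D) && ~~ leafG v).
Proof.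
apply/idP/idP.
  case/imsetP => u _ ->.
  case: (boolP (u \in P)) => hu.
    case: (boolP (leafy u)) => hl; first by rewrite phi_leafy // hu hl.
    by have [h1 h2 _ _] := phi_nonleafy hu hl; rewrite h1 h2 orbT.
  have huD : u \in D by rewrite notDP.
  case: (boolP (leafG u)) => hl.
    by have [h1 _ h3] := phi_Dl huD hl; rewrite h1 h3.
  by rewrite phi_Dnl // huD hl orbT.
case/orP => /andP [h1 h2]; apply/imsetP; exists v => //.
  by rewrite phi_leafy.
by rewrite phi_Dnl.
Qed.

Lemma HV_fix v : v \in HV -> phi v = v.
Proof. by rewrite HV_char => /orP [] /andP [h1 h2]; [rewrite phi_leafy | rewrite phi_Dnl]. Qed.

Lemma HV_P v : v \in HV -> v \in P -> leafy v.
Proof. by rewrite HV_char => /orP [] /andP [h1 h2] // hP; move: h1; rewrite notDP hP. Qed.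

Lemma HV_D v : v \in HV -> v \notin P -> (v \in D) && ~~ leafG v.
Proof. by rewrite HV_char => /orP [] /andP [h1 h2] // hP; rewrite h1 in hP. Qed.


Definition hV := {v : V | v \in HV}.
Definition hE := {e : E | e \in M}.
Definition mk (a : V) : hV := exist _ (phi a) (imset_f phi (in_setT a)).
Definition endsH (m : hE) : hV * hV := (mk (ends (val m)).1, mk (ends (val m)).2).
Definition H := MGraph endsH.
Definition alpha (u : gV H) : nat := #|ND (val u)|.

Lemma endkH (p : hE * bool) : endk endsH p = mk (endk ends (val p.1, p.2)).
Proof. by case: p => m []. Qed.

Lemma endk_inP (m : hE) k : endk ends (val m, k) \in P.
Proof. by case/and3P: (HMe (valP m)); case: k. Qed.

Lemma mkE a (u : hV) : (mk a == u) = (phi a == val u).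
Proof. by []. Qed.

Lemma conn_par e e' a b : conn e a b -> conn e' a b -> conn e' (ends e).1 (ends e).2.
Proof. move=> h c; case/orP: h => /eqP -> /=; by rewrite /= ?c // connC. Qed.

Lemma degH_P (u : hV) : val u \in P -> deg endsH setT u = 1.
Proof.
move=> hu; have hl := HV_P (valP u) hu.
have [m [k [hm hk]]] := mside_ex hu.
apply/eqP/cards1P; exists (exist _ m hm, k); apply/setP => -[m' k']; rewrite !inE /=.
rewrite endkH mkE /=; apply/idP/eqP => [/eqP hp|[-> ->]]; last first.
  by rewrite /= hk phi_leafy.
have hz := endk_inP m' k'.
case: (boolP (leafy (endk ends (val m', k')))) => hlz; last first.
  have [h1 _ _ _] := phi_nonleafy hz hlz.
  by move: h1; rewrite hp notDP hu.
rewrite phi_leafy // -hk in hp.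
have [e1 e2] := mside_uniq (valP m') hm hp.
by subst k'; congr pair; apply: val_inj.
Qed.

Lemma degH_D (u : hV) : val u \notin P -> 1 < deg endsH setT u.
Proof.
move=> hu; have /andP [hyD nl] := HV_D (valP u) hu.
set y := val u in hyD nl hu *.
have [x1 [hx1 [e1 _ c1]]] := domE HdomP hu.
have [e2 [x2 [ne c2]]] := other_edge c1 nl.
have hx2 := connD c2 hyD.
have nx : x1 != x2.
  apply/eqP => ex; subst x2.
  exact: (simple ne (conn_par c2 c1)).
have [m1 [k1 [hm1 hk1]]] := mside_ex hx1.
have [m2 [k2 [hm2 hk2]]] := mside_ex hx2.
set s1 : hE * bool := (exist _ m1 hm1, k1).
set s2 : hE * bool := (exist _ m2 hm2, k2).
have ns : s1 != s2 by apply: contra nx => /eqP [em ek]; rewrite -hk1 -hk2 em ek.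
have hs : forall x (m : E) (hm : m \in M) k, x \in P -> endk ends (m,k) = x -> adj ends setT x y -> (exist _ m hm, k) \in [set p : hE * bool | (p.1 \in setT) && (endk endsH p == u)].
  move=> x m hm k hx hk ha; rewrite !inE endkH mkE /= hk.
  by rewrite (phi_adjnl hx hyD ha nl).
have h1 : s1 \in [set p : hE * bool | (p.1 \in setT) && (endk endsH p == u)].
  apply: (hs x1 m1 hm1 k1 hx1 hk1); apply/adjP; exists e1 => //; by rewrite connC.
have h2 : s2 \in [set p : hE * bool | (p.1 \in setT) && (endk endsH p == u)].
  apply: (hs x2 m2 hm2 k2 hx2 hk2); apply/adjP; exists e2 => //; by rewrite connC.
have hsub : [set s1; s2] \subset [set p : hE * bool | (p.1 \in setT) && (endk endsH p == u)].
  by apply/subsetP => p /set2P [] ->.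
rewrite /deg; apply: leq_trans (subset_leq_card hsub).
by rewrite cards2 ns.
Qed.

Lemma hleafH (u : gV H) : hleaf u = (val u \in P).
Proof.
rewrite /hleaf; case: (boolP (val u \in P)) => hu; first by rewrite degH_P.
by have := degH_D hu; case: (deg _ _ _) => [|[]].
Qed.

Lemma noisoH : no_isolated H.
Proof.
move=> u; case: (boolP (val u \in P)) => hu; first by rewrite degH_P.
by have := degH_D hu; apply: leq_trans.
Qed.

Lemma alpha_pos (u : gV H) : hleaf u -> 0 < alpha u.
Proof.
rewrite hleafH => hu; have [y hy] := ND_ne hu.
by rewrite /alpha; apply/card_gt0P; exists y.
Qed.


Definition finv (s : S2_V alpha) : V :=
  match s with
  | inl (inl w) => val (val w)
  | inl (inr c) => enum_val (A := ND (val (val (tag c)))) (tagged c)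
  | inr p => endk ends (val p.1, p.2)
  end.

Definition edge_of x y d := odflt d [pick e | conn e x y].

Definition ginv (s : S2_E alpha) : E :=
  match s with
  | inl (inl m) => val m
  | inl (inr b) => edge_of (endk ends (val (val b).1, (val b).2))
                           (phi (endk ends (val (val b).1, (val b).2))) (val (val b).1)
  | inr c => edge_of (endk ends (val (val (tag c)).1, (val (tag c)).2))
                     (enum_val (A := ND (val (endk endsH (val (tag c))))) (tagged c))
                     (val (val (tag c)).1)
  end.


Lemma conn_eq e e' x y : conn e x y -> conn e' x y -> e = e'.
Proof.
move=> c c'; apply/eqP; apply/negPn/negP => ne.
exact: (simple ne (conn_par c c')).
Qed.

Lemma edge_ofP x y d : adj ends setT x y -> conn (edge_of x y d) x y.
Proof.
move=> /adjP [e _ c]; rewrite /edge_of.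
by case: pickP => [e' he'|/(_ e)] //=; rewrite c.
Qed.

Lemma edge_of_uniq x y d e : conn e x y -> edge_of x y d = e.
Proof.
move=> c; have ha : adj ends setT x y by apply/adjP; exists e.
exact: conn_eq (edge_ofP d ha) c.
Qed.

Lemma conn_notM e a b : conn e a b -> b \in D -> e \notin M.
Proof.
move=> c hb; apply/negP => /HMe /and3P [_ h1 h2]; move: hb; rewrite notDP.
by case/orP: c => /eqP E'; rewrite E' /= in h1 h2; rewrite ?h1 ?h2.
Qed.

Lemma mkval a : val (mk a) = phi a. Proof. by []. Qed.

Lemma finv_nl w : (finv (inl (inl w)) \in D) && ~~ leafG (finv (inl (inl w))).
Proof.
case: w => u /= hl; apply: HV_D (valP u) _.
by rewrite -hleafH.
Qed.

Lemma finv_lc c : [/\ finv (inl (inr c)) \in D, leafG (finv (inl (inr c))) &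
   adj ends setT (val (val (tag c))) (finv (inl (inr c)))].
Proof.
case: c => t i /=; have hP : val (val t) \in P by rewrite -hleafH (valP t).
have hl := HV_P (valP (val t)) hP.
have := enum_valP i; rewrite inE => /andP [h1 h2]; split => //.
by move/forall_inP: hl; apply; rewrite inE h1 h2.
Qed.

Lemma finv_P p : finv (inr p) \in P.
Proof. exact: endk_inP. Qed.

Lemma finv_inj : injective finv.
Proof.
move=> [[w|c]|p] [[w'|c']|p'] /=.
- case: w w' => [[v hv] hl] [[v' hv'] hl'] /= e; subst v'.
  have ? := bool_irrelevance hv hv'; subst hv'.
  by have ? := bool_irrelevance hl hl'; subst hl'.
- move=> e; have /andP [_ nl] := finv_nl w; have [_ hl _] := finv_lc c'.
  by move: nl; rewrite /= e hl.
- move=> e; have /andP [hD _] := finv_nl w; have := finv_P p'.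
  by rewrite /= -e -[_ \in P]negbK -notDP hD.
- move=> e; have /andP [_ nl] := finv_nl w'; have [_ hl _] := finv_lc c.
  by move: nl; rewrite /= -e hl.
- move=> e; have [_ hl ha] := finv_lc c; have [_ _ ha'] := finv_lc c'.
  move: ha ha' hl; rewrite /= e => ha ha' hl.
  rewrite adjC in ha; rewrite adjC in ha'.
  have ex := leaf_uniq hl ha ha'.
  case: c c' e ex {ha ha' hl} => t i [t' i'] /= e ex.
  have et : t = t' by do 2 apply: val_inj.
  subst t'; by have -> : i = i' by exact: enum_val_inj e.
- move=> e; have [hD _ _] := finv_lc c; have := finv_P p'.
  by rewrite /= -e -[_ \in P]negbK -notDP hD.
- move=> e; have /andP [hD _] := finv_nl w'; have := finv_P p.
  by rewrite /= e -[_ \in P]negbK -notDP hD.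
- move=> e; have [hD _ _] := finv_lc c'; have := finv_P p.
  by rewrite /= e -[_ \in P]negbK -notDP hD.
- case: p p' => m k [m' k'] /= e.
  have [em ek] := mside_uniq (valP m) (valP m') e.
  subst k'; case: m m' em {e} => [m hm] [m' hm'] /= em; subst m'.
  by have ? := bool_irrelevance hm hm'; subst hm'.
Qed.


Lemma finv_surj v : exists s, finv s = v.
Proof.
case: (boolP (v \in P)) => hvP.
  have [m [k [hm hk]]] := mside_ex hvP.
  by exists (inr (exist _ m hm, k)).
have hvD : v \in D by rewrite notDP.
case: (boolP (leafG v)) => hl.
  have [hx ha hly] := phi_Dl hvD hl.
  have hxV : phi v \in HV by rewrite HV_char hx hly.
  pose u : gV H := exist _ (phi v) hxV.
  have hu : hleaf u by rewrite hleafH.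
  pose t : {u : gV H | hleaf u} := exist _ u hu.
  have hvN : v \in ND (phi v) by rewrite inE hvD adjC ha.
  exists (inl (inr (existT (fun t : {u : gV H | hleaf u} => 'I_(alpha (val t))) t
     (enum_rank_in hvN v)))).
  by rewrite /= enum_rankK_in.
have hvV : v \in HV by rewrite HV_char hvD hl orbT.
pose u : gV H := exist _ v hvV.
have hu : ~~ hleaf u by rewrite hleafH.
by exists (inl (inl (exist _ u hu))).
Qed.

Lemma ginv_compat s : conn (ginv s) (finv (S2_ends s).1) (finv (S2_ends s).2).
Proof.
case: s => [[m|b]|c] /=.
- by rewrite /conn /= -surjective_pairing eqxx.
- set x := endk ends (val (val b).1, (val b).2).
  have hx : x \in P by exact: endk_inP.
  have hnl := valP b; rewrite /= hleafH /= endkH mkval -/x in hnl.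
  have nly : ~~ leafy x by apply: contra hnl => hl; rewrite phi_leafy.
  have [_ _ ha _] := phi_nonleafy hx nly.
  by rewrite endkH mkval -/x connC; apply: edge_ofP.
- case: c => t i /=.
  set x := endk ends (val (val t).1, (val t).2).
  have hx : x \in P by exact: endk_inP.
  apply: edge_ofP; have := enum_valP i; rewrite inE => /andP [_].
  have hl := valP t; rewrite /= hleafH /= endkH mkval -/x in hl.
  have ly : leafy x by apply/negPn/negP => nly; have [h1 _ _ _] := phi_nonleafy hx nly; move: h1; rewrite notDP hl.
  have e1 : val (endk endsH (val t)) = x by rewrite endkH mkval -/x phi_leafy.
  by rewrite -{1}e1.
Qed.


Lemma conn_PD e a b a' b' : conn e a b -> conn e a' b' -> a \in P -> b \in D ->
  a' \in P -> b' \in D -> a = a' /\ b = b'.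
Proof.
move=> c c' ha hb ha' hb'; case: (conn_cases c c') => -[h1 h2] //.
by move: hb'; rewrite -h1 notDP ha.
Qed.

Lemma ginv_sides s : match s with
  | inl (inl m) => is_true (ginv s \in M)
  | inl (inr b) => conn (ginv s) (endk ends (val (val b).1, (val b).2))
                     (finv (S2_ends s).1) /\ finv (S2_ends s).1 \in D
  | inr c => conn (ginv s) (endk ends (val (val (tag c)).1, (val (tag c)).2))
                     (finv (S2_ends s).2) /\ finv (S2_ends s).2 \in D
  end.
Proof.
have := ginv_compat s; case: s => [[m|b]|c] cc.
- exact: valP m.
- split; first by rewrite connC.
  by case/andP: (finv_nl (exist _ (endk endsH (val b)) (valP b))).
- split => //; by case: (finv_lc (existT (fun t : {u : gV H | hleaf u} => 'I_(alpha (val t)))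
      (exist _ (endk endsH (val (tag c))) (valP (tag c))) (tagged c))).
Qed.

Lemma ginv_inj : injective ginv.
Proof.
move=> s s' e; have hs := ginv_sides s; have hs' := ginv_sides s'.
case: s s' e hs hs' => [[m|b]|c] [[m'|b']|c'] e.
- move=> _ _; case: m m' e => [m hm] [m' hm'] /= em; subst m'.
  by have ? := bool_irrelevance hm hm'; subst hm'.
- by move=> hm [q' hd]; move: hm; rewrite e (negbTE (conn_notM q' hd)).
- by move=> hm [q' hd]; move: hm; rewrite e (negbTE (conn_notM q' hd)).
- by move=> [q hd] hm; move: hm; rewrite -e (negbTE (conn_notM q hd)).
- move=> [q hd] [q' hd']; rewrite e in q.
  have [ex _] := conn_PD q q' (endk_inP _ _) hd (endk_inP _ _) hd'.
  have := finv_inj (x1 := inr (val b)) (x2 := inr (val b')) ex.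
  case=> eb; case: b b' eb {q q' hd hd' e ex} => [p hp] [p' hp'] /= ep; subst p'.
  by have ? := bool_irrelevance hp hp'; subst hp'.
- move=> [q hd] [q' hd']; rewrite e in q.
  have [ex _] := conn_PD q q' (endk_inP _ _) hd (endk_inP _ _) hd'.
  have := finv_inj (x1 := inr (val b)) (x2 := inr (val (tag c'))) ex.
  case=> eb; have h1 := valP b; have h2 := valP (tag c').
  by move: h1; rewrite /= eb h2.
- by move=> [q hd] hm; move: hm; rewrite -e (negbTE (conn_notM q hd)).
- move=> [q hd] [q' hd']; rewrite e in q.
  have [ex _] := conn_PD q q' (endk_inP _ _) hd (endk_inP _ _) hd'.
  have := finv_inj (x1 := inr (val (tag c))) (x2 := inr (val b')) ex.
  case=> eb; have h1 := valP b'; have h2 := valP (tag c).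
  by move: h1; rewrite /= -eb h2.
- move=> [c0 hd] [c0' hd']; rewrite e in c0.
  have [ex ey] := conn_PD c0 c0' (endk_inP _ _) hd (endk_inP _ _) hd'.
  have := finv_inj (x1 := inr (val (tag c))) (x2 := inr (val (tag c'))) ex.
  case: c c' {e c0 c0' hd hd' ex} ey => [[p hp] i] [[p' hp'] i'] /= ey [ep]; subst p'.
  have ? := bool_irrelevance hp hp'; subst hp'.
  by have -> : i = i' by exact: enum_val_inj ey.
Qed.


Lemma nonM_ends e : e \notin M -> exists x y, [/\ x \in P, y \in D & conn e x y].
Proof.
move=> /nonM_DP; case: (boolP ((ends e).1 \in D)) => h1 /= h2.
  exists (ends e).2, (ends e).1; split => //; first by rewrite -[_ \in P]negbK -notDP.
  by rewrite /conn -surjective_pairing eqxx orbT.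
exists (ends e).1, (ends e).2; split => //; first by rewrite -[_ \in P]negbK -notDP.
  by rewrite negbK in h2.
by rewrite /conn -surjective_pairing eqxx.
Qed.

Lemma ginv_surj e : exists s, ginv s = e.
Proof.
case: (boolP (e \in M)) => heM.
  by exists (inl (inl (exist (fun e => e \in M) e heM))).
have [x [y [hx hy c]]] := nonM_ends heM.
have ha : adj ends setT x y by apply/adjP; exists e.
have [m [k [hm hk]]] := mside_ex hx.
pose p : hE * bool := (exist _ m hm, k).
have hp : val (endk endsH p) = phi x by rewrite endkH mkval /= hk.
case: (boolP (leafG y)) => hl.
  have ly := leafy_of hx hy ha hl.
  have hlp : @hleaf H (endk endsH p) by rewrite hleafH hp phi_leafy.
  pose t : {p : gE H * bool | hleaf (endk (@gends H) p)} := exist _ p hlp.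
  have hyN : y \in ND (val (endk endsH p)) by rewrite hp phi_leafy // inE hy ha.
  pose i : 'I_(alpha (endk (@gends H) (val t))) := enum_rank_in hyN y.
  exists (inr (existT _ t i)).
  rewrite /= enum_rankK_in //; rewrite hk; exact: edge_of_uniq.
have hph := phi_adjnl hx hy ha hl.
have hnl : ~~ @hleaf H (endk endsH p) by rewrite hleafH hp hph -notDP.
exists (inl (inr (exist _ p hnl))).
rewrite /= hk hph; exact: edge_of_uniq.
Qed.


Lemma iso : mg_iso (MGraph ends) (S2 alpha).
Proof.
have Hc : forall v, v \in codom finv.
  by move=> v; have [s hs] := finv_surj v; apply/codomP; exists s.
have Hd : forall e, e \in codom ginv.
  by move=> e; have [s hs] := ginv_surj e; apply/codomP; exists s.
pose f v := iinv (Hc v); pose g e := iinv (Hd e).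
have fK : cancel f finv by move=> v; rewrite /f f_iinv.
have Kf : cancel finv f by move=> s; apply: finv_inj; rewrite fK.
have gK : cancel g ginv by move=> e; rewrite /g f_iinv.
have Kg : cancel ginv g by move=> s; apply: ginv_inj; rewrite gK.
exists f, g; split.
- exact: Bijective fK Kf.
- exact: Bijective gK Kg.
move=> e /=; have := ginv_compat (g e); rewrite gK.
rewrite /conn => /orP [] /eqP -> /=; rewrite !Kf -surjective_pairing; by [left | right].
Qed.

Lemma part1 : maxset (independent ends setT) D.
Proof.
apply/maxsetP; split.
  apply/forall_inP => e _; apply/negP => /andP [h1 h2].
  case: (boolP (e \in M)) => heM.
    by case/and3P: (HMe heM) => _ h3 _; move: h1; rewrite notDP h3.
  by move: (nonM_DP heM); rewrite h1 h2.
move=> B hB sDB; apply/eqP; rewrite eqEsubset andbC sDB /=; apply/subsetP => v hv.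
apply/negPn/negP => hvD; have [u [hu [e _ c]]] := domE HdomD hvD.
have huB : u \in B by apply: (subsetP sDB).
move/forall_inP: hB => /(_ e (in_setT e)); apply/negP/negPn.
by case/orP: c => /eqP -> /=; rewrite hv huB.
Qed.

Lemma part2 x : x \in P -> induced_deg ends setT P x = 1.
Proof.
move=> hx; have [m [k [hm hk]]] := mside_ex hx.
apply/eqP/cards1P; exists (m,k); apply/setP => -[e' k']; rewrite !inE /=.
apply/idP/eqP => [/and3P [/eqP hk' h1 h2]|[-> ->]]; last first.
  by rewrite hk eqxx; case/and3P: (HMe hm) => _ -> ->.
have he' : e' \in M.
  apply/negPn/negP => /nonM_DP; by rewrite !notDP h1 h2.
rewrite -hk in hk'; have [-> ->] := mside_uniq he' hm hk'; by [].
Qed.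

Lemma part3 x : x \in P ->
         #|nbhd ends setT x :\: P| = 1 \/
         (nbhd ends setT x :\: P != set0 /\
          nbhd ends setT x :\: P \subset leaves ends setT).
Proof.
move=> hx; have -> : nbhd ends setT x :\: P = ND x.
  by apply/setP => y; rewrite !inE notDP.
case: (boolP (leafy x)) => hl.
  right; split.
    have [y hy] := ND_ne hx; by apply/set0Pn; exists y.
  apply/subsetP => y hy; rewrite inE; by move/forall_inP: hl; apply.
left; have [_ _ _ H1] := phi_nonleafy hx hl.
have [y hy] := ND_ne hx.
apply/eqP/cards1P; exists (phi x); apply/setP => z; rewrite inE.
apply/idP/eqP => [/H1 //|->]; by rewrite -(H1 y hy).
Qed.

End Main.


Theorem theorem4p5 (V E : finType) (ends : E -> V * V) (D P : {set V}) :
  minimal_DPDP ends -> DPpair ends setT D P ->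
  [/\ (* (1) *) maxset (independent ends setT) D,
      (* (2) every vertex of G[P] has degree exactly 1 *)
      (forall x, x \in P -> induced_deg ends setT P x = 1),
      (* (3) *)
      (forall x, x \in P ->
         #|nbhd ends setT x :\: P| = 1 \/
         (nbhd ends setT x :\: P != set0 /\
          nbhd ends setT x :\: P \subset leaves ends setT))
    & (* (4) *)
      exists (H : mgraph) (alpha : gV H -> nat),
        [/\ no_isolated H,
            (forall v : gV H, hleaf v -> 0 < alpha v)
          & mg_iso (MGraph ends) (S2 alpha)]].
Proof.
move=> Hmin /and4P [/eqP H0 /eqP H1 HdD /andP [HdP /existsP [M /andP [/andP [_ /forall_inP HMe] /forall_inP HMx]]]].
have HMx' : forall x, x \in P -> #|[set e in M | ((ends e).1 == x) || ((ends e).2 == x)]| = 1.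
  by move=> x hx; apply/eqP; apply: HMx.
split.
- exact: part1 Hmin H0 H1 HdD HdP HMe HMx'.
- exact: part2 Hmin H0 H1 HdD HdP HMe HMx'.
- exact: part3 Hmin H0 H1 HdD HdP HMe HMx'.
exists (H ends D P M), (@alpha V E ends D P M); split.
- exact: noisoH Hmin H0 H1 HdD HdP HMe HMx'.
- exact: alpha_pos Hmin H0 H1 HdD HdP HMe HMx'.
- exact: iso Hmin H0 H1 HdD HdP HMe HMx'.
Qed.
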